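(* Let $A$ be a circular $m\times n$ matrix and let $\Gamma$ be a circuit in $F(A)$ with winding number $p$. For each node $j\in[n]$ let $r(j)$ be the number of row arcs of $\Gamma$ that jump over $j$. Then $r(j)=p-1$ if $j\in\circ(\Gamma)$, $r(j)=p+1$ if $j\in\otimes(\Gamma)$, and $r(j)=p$ if $j\in\bullet(\Gamma)$.
   Context: Notation: $[n]=\{1,\dots,n\}$ with addition mod $n$ (index $0$ identified with $n$); for $a,c\in[n]$ with $t\ge0$ minimal such that $a+t\equiv c\pmod n$, $[a,c)_n=\{a,\dots,a+t-1\}$ (mod $n$). An $m\times n$ $\{0,1\}$-matrix $A$ is circular if for each row $i$ there are $\ell_i\in[n]$ and an integer $2\le k_i\le n-1$ with row $i$ the incidence vector of $[\ell_i,\ell_i+k_i)_n$. $F(A)$: digraph on $[n]$ (labels mod $n$) with row arcs $a_i=(\ell_i-1,\ell_i+k_i-1)$ ($i\in[m]$, length $k_i$), forward short arcs $(j-1,j)$ (length $1$) and reverse short arcs $(j,j-1)$ (length $-1$), $j\in[n]$. A circuit is a simple directed circuit; winding number $p(\Gamma)$: $p(\Gamma)n=$ sum of lengths of arcs of $\Gamma$. A row arc $a_i$ jumps over node $j$ iff $j\in[\ell_i,\ell_i+k_i)_n$. For a circuit $\Gamma$: $\circ(\Gamma)=\{j:(j-1,j)\in E(\Gamma)\}$, $\otimes(\Gamma)=\{j:(j,j-1)\in E(\Gamma)\}$, $\bullet(\Gamma)=[n]\setminus(\circ(\Gamma)\cup\otimes(\Gamma))$. *)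

(* Defs.v *)
From mathcomp Require Import all_boot all_order all_algebra.
Set Implicit Arguments. Unset Strict Implicit. Unset Printing Implicit Defensive.

(* Nodes of [n] = {1,...,n} are handled modulo n: the natural number x
   denotes the node x mod n (so 0 and n denote the same node n). *)

(* cyclic interval membership: j \in [a, a+k)_n  (for 0 <= k <= n) *)
Definition cint (n a k j : nat) : bool :=
  ((j %% n) + n - (a %% n)) %% n < k.

(* A is the m x n {0,1}-matrix whose row i is the incidence vector of
   [l_i, l_i + k_i)_n, with l_i in [n] and 2 <= k_i <= n-1.
   Column c : 'I_n corresponds to column index c+1 in [n]. *)
Definition circular_with (m n : nat) (A : 'M[nat]_(m, n))
    (l k : 'I_m -> nat) : Prop :=
  forall i : 'I_m,
    [/\ 1 <= l i <= n, 2 <= k i <= n.-1 &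
        forall c : 'I_n, A i c = nat_of_bool (cint n (l i) (k i) c.+1)].

(* Arcs of F(A): row farc a_i, forward short farc (j-1,j), reverse short farc
   (j,j-1), with j : 'I_n denoting node j mod n. *)
Inductive farc (m n : nat) : Type :=
| RowArc of 'I_m
| FwdArc of 'I_n
| RevArc of 'I_n.

Section Arcs.
Variables (m n : nat) (l k : 'I_m -> nat).

Definition atail (a : farc m n) : nat :=
  match a with
  | RowArc i => (l i).-1 %% n
  | FwdArc j => (j + n).-1 %% n
  | RevArc j => j %% n
  end.

Definition ahead (a : farc m n) : nat :=
  match a with
  | RowArc i => (l i + k i).-1 %% n
  | FwdArc j => j %% n
  | RevArc j => (j + n).-1 %% n
  end.

Definition alen (a : farc m n) : int :=
  match a with
  | RowArc i => (k i)%:Z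
  | FwdArc _ => 1%R
  | RevArc _ => (-1)%R
  end.

Definition circuit (c : seq (farc m n)) : bool :=
  [&& 0 < size c,
      cycle (fun a b => ahead a == atail b) c &
      uniq (map atail c)].

Definition isFwd (j : 'I_n) (a : farc m n) : bool :=
  if a is FwdArc j' then j' == j else false.
Definition isRev (j : 'I_n) (a : farc m n) : bool :=
  if a is RevArc j' then j' == j else false.

Definition in_circ (c : seq (farc m n)) (j : 'I_n) : bool := has (isFwd j) c.
Definition in_otimes (c : seq (farc m n)) (j : 'I_n) : bool := has (isRev j) c.

Definition total_length (c : seq (farc m n)) : int :=
  (\sum_(a <- c) alen a)%R.

Definition jumps (j : 'I_n) (a : farc m n) : bool :=
  if a is RowArc i then cint n (l i) (k i) j else false.

Definition rjump (c : seq (farc m n)) (j : 'I_n) : nat := count (jumps j) c.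

End Arcs.

(* Main.v *)
Require Import Defs.
From mathcomp Require Import all_boot all_order all_algebra.
From mathcomp Require Import zify ring.
Lemma modn_lt2 x n : n <= x < n + n -> x %% n = x - n.
Proof. move=> h; rewrite -{1}(subnK (_ : n <= x)) ?modnDr ?modn_small; lia. Qed.

Ltac split_bools := repeat match goal with |- context[if (?a <= ?b)%N then _ else _] => case: (leqP a b) => ? end; repeat match goal with |- context[(?a <= ?b)%N] => case: (leqP a b) => ? end.

Lemma row_id n l k j : j < n -> 1 <= l <= n -> 2 <= k <= n.-1 ->
 n * cint n l k j + n * (j <= (l.-1 %% n)) + (l+k).-1 %% n = n * (j <= (l+k).-1 %% n) + l.-1 %% n + k.
Proof.
move=> jn /andP[l1 ln] /andP[k2 kn].
rewrite /cint (modn_small jn) (@modn_small l.-1); last lia.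
have -> : l %% n = if l < n then l else 0.
  case: ltnP => h; first by rewrite modn_small.
  have -> : l = n by lia.
  by rewrite modnn.
have -> : (l+k).-1 %% n = if (l+k).-1 < n then (l+k).-1 else (l+k).-1 - n.
  case: ltnP => h; first by rewrite modn_small. by rewrite modn_lt2 //; lia.
set L := (if l < n then l else 0).
have -> : (j + n - L) %% n = if j + n - L < n then j + n - L else j + n - L - n.
  case: ltnP => h; first by rewrite modn_small. by rewrite modn_lt2 //; lia.
rewrite /L.
case: (ltnP l n) => ?; case: (ltnP (l+k).-1 n) => ?; split_bools; rewrite /nat_of_bool ?muln1 ?muln0; lia.
Qed.

Lemma fwd_id n j' j : j' < n -> j < n ->
  n * (j' == j) + n * (j <= (j'+n).-1 %% n) + j' %% n = n * (j <= j' %% n) + (j'+n).-1 %% n + 1.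
Proof.
move=> h1 h2; rewrite (modn_small h1).
have -> : (j'+n).-1 %% n = if 0 < j' then j'.-1 else n.-1.
  case: ltnP => h.
    by rewrite modn_lt2; lia.
  by rewrite modn_small; lia.
case: (ltnP 0 j') => ?; case: eqP => ?; split_bools; rewrite /nat_of_bool ?muln1 ?muln0; lia.
Qed.

Lemma rev_id n j' j : j' < n -> j < n ->
  n * (j <= j' %% n) + (j'+n).-1 %% n + 1 = n * (j' == j) + n * (j <= (j'+n).-1 %% n) + j' %% n.
Proof. by move=> h1 h2; symmetry; apply: fwd_id. Qed.

Import GRing.Theory.
Local Open Scope ring_scope.

Section Main.
Variables (m n : nat) (l k : 'I_m -> nat).

Definition G (j x : nat) : int := (n * (j <= x))%:Z - x%:Z.
Definition cov (j : 'I_n) (a : farc m n) : int :=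
  (jumps l k j a)%:Z + (isFwd j a)%:Z - (isRev j a)%:Z.

Lemma local_id (hl : forall i, (1 <= l i <= n)%N /\ (2 <= k i <= n.-1)%N) (j : 'I_n) a :
  n%:Z * cov j a = G j (ahead l k a) - G j (atail l a) + alen k a.
Proof.
rewrite /cov /G; case: a => [i|j'|j'] /=.
{ have [h1 h2] := hl i.
  move: (@row_id n (l i) (k i) j (ltn_ord j) h1 h2).
  case: (cint _ _ _ _); case: (j <= _)%N; case: (j <= _)%N; rewrite /nat_of_bool ?muln1 ?muln0 /=; lia.
}
{ move: (@fwd_id n j' j (ltn_ord j') (ltn_ord j)).
  rewrite (modn_small (ltn_ord j')); move: ((j'+n).-1 %% n)%N => h.
  case: (eqVneq j' j) => [->|ne]; rewrite ?eqxx; last first.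
    try (have -> : (nat_of_ord j' == nat_of_ord j) = false by apply/negbTE; exact: ne).
  all: repeat match goal with |- context[nat_of_bool ?b] => lazymatch b with true => fail | false => fail | _ => case: b end end; rewrite /nat_of_bool ?muln1 ?muln0 /=; lia.
}
{ move: (@rev_id n j' j (ltn_ord j') (ltn_ord j)).
  rewrite (modn_small (ltn_ord j')); move: ((j'+n).-1 %% n)%N => h.
  case: (eqVneq j' j) => [->|ne]; rewrite ?eqxx; last first.
    try (have -> : (nat_of_ord j' == nat_of_ord j) = false by apply/negbTE; exact: ne).
  all: repeat match goal with |- context[nat_of_bool ?b] => lazymatch b with true => fail | false => fail | _ => case: b end end; rewrite /nat_of_bool ?muln1 ?muln0 /=; lia.
}
Qed.

Lemma path_sum (j : nat) (x : farc m n) (s : seq (farc m n)) :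
  path (fun a b => ahead l k a == atail l b) x s ->
  \sum_(b <- x :: s) (G j (ahead l k b) - G j (atail l b)) =
  G j (ahead l k (last x s)) - G j (atail l x).
Proof.
elim: s x => [|y s IH] x /=; first by rewrite big_seq1.
case/andP => /eqP e hp.
rewrite big_cons IH // e; ring.
Qed.

Lemma cycle_sum (j : nat) (c : seq (farc m n)) :
  cycle (fun a b => ahead l k a == atail l b) c ->
  \sum_(b <- c) (G j (ahead l k b) - G j (atail l b)) = 0.
Proof.
case: c => [|x s]; first by rewrite big_nil.
rewrite /cycle => /(path_sum j).
rewrite last_rcons -cats1 -cat_cons big_cat big_seq1 /=.
by move/(congr1 (fun t => t - (G j (ahead l k x) - G j (atail l x)))); rewrite addrK subrr.
Qed.

Lemma sum_count (T : Type) (P : pred T) (s : seq T) :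
  \sum_(a <- s) (P a)%:Z = (count P s)%:Z.
Proof.
elim: s => [|x s IH]; first by rewrite big_nil.
by rewrite big_cons IH /= PoszD.
Qed.

End Main.

Theorem lemma6p1 (m n : nat) (A : 'M[nat]_(m, n)) (l k : 'I_m -> nat)
    (c : seq (farc m n)) (p : int) :
  circular_with A l k ->
  circuit l k c ->
  (* the degenerate 2-circuit {(j-1,j),(j,j-1)} is excluded (see NOTES) *)
  ~ (exists j : 'I_n, in_circ c j && in_otimes c j) ->
  total_length k c = (p * n%:Z)%R ->
  forall j : 'I_n,
    [/\ in_circ c j -> (rjump l k c j)%:Z = (p - 1)%R,
        in_otimes c j -> (rjump l k c j)%:Z = (p + 1)%R &
        ~~ in_circ c j -> ~~ in_otimes c j -> (rjump l k c j)%:Z = p].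
Proof.
move=> hA /and3P[_ hcyc huniq] hex htot j.
have hl : forall i, (1 <= l i <= n)%N /\ (2 <= k i <= n.-1)%N.
  by move=> i; case: (hA i).
have nz : n%:Z != 0 by apply/eqP; have := ltn_ord j; lia.
have key : \sum_(a <- c) @cov m n l k j a = p.
  apply: (mulIf nz); rewrite -htot big_distrl /=.
  under eq_bigr => a _ do rewrite mulrC (@local_id m n l k hl).
  by rewrite big_split /= (@cycle_sum m n l k j c hcyc) add0r.
have hsum : \sum_(a <- c) @cov m n l k j a =
    (rjump l k c j)%:Z + (count (isFwd j) c)%:Z - (count (isRev j) c)%:Z.
  by rewrite /cov big_split big_split /= sumrN !sum_count.
have cF : (count (isFwd j) c <= 1)%N.
  apply: (@leq_trans (count (pred1 ((j+n).-1 %% n)%N) (map (atail l) c))).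
    rewrite count_map; apply: sub_count => a; case: a => //= j' /eqP -> /=; exact: eqxx.
  by rewrite count_uniq_mem // leq_b1.
have cR : (count (isRev j) c <= 1)%N.
  apply: (@leq_trans (count (pred1 (j %% n)%N) (map (atail l) c))).
    rewrite count_map; apply: sub_count => a; case: a => //= j' /eqP -> /=; exact: eqxx.
  by rewrite count_uniq_mem // leq_b1.
have hx : ~~ (in_circ c j && in_otimes c j) by apply/negP => h; apply: hex; exists j.
move: key hx; rewrite hsum /in_circ /in_otimes !has_count.
move: cF cR; case: (count (isFwd j) c) => [|[|?]] //; case: (count (isRev j) c) => [|[|?]] //= _ _ key _;
  split => //; lia.
Qed.
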